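(* For every finite graph $G$ with maximum degree $\Delta\ge 1$, $\chi_s(G)\le 2\sqrt{2}\,\Delta^{3/2}+\Delta$.
   Context: A star coloring of a graph is a proper vertex-coloring in which every path on four vertices contains at least three colors (equivalently, any two color classes induce a forest of stars). The star chromatic number $\chi_s(G)$ is the minimum number of colors in a star coloring of $G$. *)

(* Defs.v *)
From mathcomp Require Import all_boot all_order all_algebra.
Set Implicit Arguments. Unset Strict Implicit. Unset Printing Implicit Defensive.

Definition simple_graph (T : finType) (e : rel T) : Prop :=
  symmetric e /\ irreflexive e.

Definition deg (T : finType) (e : rel T) (x : T) : nat := #|[set y | e x y]|.

Definition max_degree (T : finType) (e : rel T) : nat := \max_(x : T) deg e x.

Definition proper_coloring (T : finType) (e : rel T) k (f : T -> 'I_k) : bool :=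
  [forall x, forall y, e x y ==> (f x != f y)].

Definition star_coloring (T : finType) (e : rel T) k (f : T -> 'I_k) : bool :=
  proper_coloring e f &&
  [forall a, forall b, forall c, forall d,
     (uniq [:: a; b; c; d] && [&& e a b, e b c & e c d]) ==>
     (3 <= size (undup [:: f a; f b; f c; f d]))].

Definition star_colorable (T : finType) (e : rel T) (k : nat) : bool :=
  [exists f : {ffun T -> 'I_k}, star_coloring e f].

Lemma star_colorable_card (T : finType) (e : rel T) :
  irreflexive e -> exists k, star_colorable e k.
Proof.
move=> irr; exists #|T|; apply/existsP; exists [ffun x => enum_rank x].
apply/andP; split.
  apply/forallP => x; apply/forallP => y; apply/implyP => exy.
  rewrite !ffunE; apply/negP => /eqP /enum_rank_inj exy'.
  by move: exy; rewrite exy' irr.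
apply/forallP => a; apply/forallP => b; apply/forallP => c; apply/forallP => d.
apply/implyP => /andP [u _]; rewrite !ffunE.
have -> : undup [:: enum_rank a; enum_rank b; enum_rank c; enum_rank d] =
          [:: enum_rank a; enum_rank b; enum_rank c; enum_rank d].
  apply/undup_id.
  by rewrite (map_inj_uniq (f := enum_rank) enum_rank_inj
        [:: a; b; c; d]) in u * ; move: u; rewrite /= .
by [].
Qed.

Lemma star_colorable_ex (T : finType) (e : rel T) :
  exists k, star_colorable e k || [exists x, e x x].
Proof.
case: (boolP [exists x, e x x]) => [h|h]; first by exists 0; apply/orP; right.
have irr : irreflexive e by move=> x; apply/negP => exx; move/existsP: h; apply; exists x.
by have [k hk] := star_colorable_card irr; exists k; rewrite hk.
Qed.

(* star chromatic number chi_s: least k admitting a star coloring with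
   k colors (for a relation with a loop, which is not a simple graph,
   the value is meaningless / 0) *)
Definition star_chromatic (T : finType) (e : rel T) : nat :=
  ex_minn (star_colorable_ex e).

(* Main.v *)
Require Import Defs.
From mathcomp Require Import all_boot all_order all_algebra.
From mathcomp Require Import zify ring lra.
Import Order.TTheory GRing.Theory Num.Theory.
Set Implicit Arguments. Unset Strict Implicit. Unset Printing Implicit Defensive.

Lemma undup3 (X : eqType) (x1 x2 x3 x4 : X) : x1 != x2 -> x2 != x3 -> x3 != x4 ->
  ~~ ((x1 == x3) && (x2 == x4)) -> 3 <= size (undup [:: x1;x2;x3;x4]).
Proof.
move=> h12 h23 h34 h; rewrite /= !inE.
case: (eqVneq x1 x3) h => [e13|n13]; case: (eqVneq x2 x4) => [e24|n24] //= _;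
 case: (eqVneq x1 x4) => [e14|n14]; subst => //=;
 rewrite ?eqxx ?(negbTE h12) ?(negbTE h23) ?(negbTE h34) ?(negbTE n13) ?(negbTE n24) ?(negbTE n14) //=;
 rewrite ?(eq_sym x2) ?(eq_sym x3) ?(negbTE h12) ?(negbTE h23) ?(negbTE h34) //=;
 repeat (case: ifP => //=).
all: try by rewrite eqxx in h34.
all: try by rewrite eqxx in h23.
all: try by rewrite eqxx in h12.
Qed.

Lemma uniq4 (X : eqType) (a b c d : X) : uniq [:: a;b;c;d] ->
  [/\ a != b, a != c & a != d] /\ [/\ b != c, b != d & c != d].
Proof.
rewrite /= !inE !negb_or => /and4P[/and3P[? ? ?] /andP[? ?] ? _]; by split.
Qed.

Lemma card_setU_le (X : finType) (A B : {set X}) : #|A :|: B| <= #|A| + #|B|.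
Proof. by rewrite cardsU leq_subr. Qed.

Lemma card_bigcup_le (I X : finType) (A : {pred I}) (F : I -> {set X}) :
  #|\bigcup_(i in A) F i| <= \sum_(i in A) #|F i|.
Proof.
elim/big_rec2: _ => [|i n U _ H]; first by rewrite cards0.
by apply: (leq_trans (card_setU_le _ _)); rewrite leq_add2l.
Qed.

Section Star.
Variables (T : finType) (e : rel T) (k : nat).

Definition col := {ffun T -> option 'I_k}.

Definition good (f : col) : bool :=
  [forall x, forall y, [&& e x y, f x != None & f y != None] ==> (f x != f y)] &&
  [forall a, forall b, forall c, forall d,
     [&& uniq [:: a; b; c; d], e a b, e b c, e c d,
         f a != None, f b != None, f c != None & f d != None] ==>
     ~~ ((f a == f c) && (f b == f d))].

Lemma goodP (f : col) : reflect
  ((forall x y, e x y -> f x != None -> f y != None -> f x != f y) /\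
   (forall a b c d, uniq [:: a; b; c; d] -> e a b -> e b c -> e c d ->
      f a != None -> f b != None -> f c != None -> f d != None ->
      ~~ ((f a == f c) && (f b == f d))))
  (good f).
Proof.
apply: (iffP andP) => [[/forallP H1 /forallP H2]|[H1 H2]]; split.
- move=> x y exy hx hy; have /forallP/(_ y) := H1 x; by rewrite exy hx hy.
- move=> a b c d u eab ebc ecd ha hb hc hd.
  have /forallP/(_ b)/forallP/(_ c)/forallP/(_ d) := H2 a.
  by rewrite u eab ebc ecd ha hb hc hd.
- apply/forallP=> x; apply/forallP=> y; apply/implyP=> /and3P[]; exact: H1.
- apply/forallP=> a; apply/forallP=> b; apply/forallP=> c; apply/forallP=> d.
  apply/implyP=> /andP[u /andP[eab /andP[ebc /andP[ecd /andP[ha /andP[hb /andP[hc hd]]]]]]].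
  exact: H2.
Qed.

Lemma good_sub (g h : col) : good g -> (forall x, h x != None -> h x = g x) -> good h.
Proof.
move=> /goodP[G1 G2] hg; apply/goodP; split.
- move=> x y exy hx hy; rewrite (hg _ hx) (hg _ hy); apply: G1 => //; by rewrite -hg.
- move=> a b c d u eab ebc ecd ha hb hc hd.
  rewrite (hg _ ha) (hg _ hb) (hg _ hc) (hg _ hd).
  apply: G2 => //; by rewrite -hg.
Qed.

Definition Good (S : {set T}) : {set col} :=
  [set f : col | [forall x, (x \in S) == (f x != None)] && good f].

Definition C S := #|Good S|.

Lemma GoodP S (f : col) : f \in Good S -> (forall x, (x \in S) = (f x != None)) /\ good f.
Proof. by rewrite inE => /andP[/forallP H G]; split => // x; apply/eqP. Qed.

Definition rem (g : col) a : col := [ffun x => if x == a then None else g x].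

Lemma Good_rem (S : {set T}) g a : g \in Good S -> rem g a \in Good (S :\ a).
Proof.
move=> /GoodP[D G]; rewrite inE; apply/andP; split.
  apply/forallP=> x; rewrite !inE ffunE.
  by case: (x =P a) => [->|/eqP xa]; rewrite ?eqxx //= ?(negbTE xa) D.
apply: (good_sub G) => x; rewrite ffunE; by case: (x =P a).
Qed.

Definition upd (g : col) v c : col := [ffun x => if x == v then Some c else g x].

Definition Bt S a x y : {set col * 'I_k} :=
  [set p : col * 'I_k | (p.1 \in Good S) &&
     [&& p.1 a != None, p.1 a == p.1 x & p.1 y == Some p.2]].

Lemma card_Bt (S : {set T}) a x y : x != a -> y != a -> #|Bt S a x y| <= C (S :\ a).
Proof.
move=> xa ya.
have inj : {in Bt S a x y &, injective (fun p : col * 'I_k => rem p.1 a)}; last first.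
  rewrite -(card_in_imset inj).
  apply: subset_leq_card; apply/subsetP => q /imsetP[p pB ->]; move: pB; rewrite inE => /andP[pG _].
  exact: Good_rem.
move=> [g1 c1] [g2 c2]; rewrite !inE /= => /andP[_ /and3P[n1 e1 s1]] /andP[_ /and3P[n2 e2 s2]] E.
have Hx : forall z, z != a -> g1 z = g2 z.
  by move=> z za; move/ffunP: E => /(_ z); rewrite !ffunE (negbTE za).
have eg : g1 = g2.
  apply/ffunP=> z; case: (eqVneq z a) => [->|za]; last exact: Hx.
  rewrite (eqP e1) (eqP e2); exact: Hx.
subst g2; move/eqP: s1 => s1; move/eqP: s2; rewrite s1 => -[->]; done.
Qed.

Lemma card_Bt0 (S : {set T}) a x y : a \notin S -> #|Bt S a x y| = 0.
Proof.
move=> aS; apply: eq_card0 => p; rewrite inE; apply/negP => /andP[/GoodP[D _] /and3P[h _ _]].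
by rewrite -D (negbTE aS) in h.
Qed.

Definition B0u S u : {set col * 'I_k} :=
  [set p : col * 'I_k | (p.1 \in Good S) && (p.1 u == Some p.2)].

Lemma card_B0u (S : {set T}) u : #|B0u S u| <= C S.
Proof.
have inj : {in B0u S u &, injective (fun p : col * 'I_k => p.1)}; last first.
  rewrite -(card_in_imset inj).
  apply: subset_leq_card; apply/subsetP => q /imsetP[p pB ->]; move: pB; rewrite inE => /andP[pG _].
  exact: pG.
move=> [g1 c1] [g2 c2]; rewrite !inE /= => /andP[_ s1] /andP[_ s2] E.
subst g2; move/eqP: s1 => s1; move/eqP: s2; rewrite s1 => -[->]; done.
Qed.

Definition E S : {set col * 'I_k} := [set p : col * 'I_k | p.1 \in Good S].

Lemma card_E (S : {set T}) : #|E S| = C S * k.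
Proof.
have -> : E S = setX (Good S) [set: 'I_k] by apply/setP => p; rewrite !inE andbT.
by rewrite cardsX cardsT card_ord.
Qed.

Lemma inE_E S p : (p \in E S) = (p.1 \in Good S).
Proof. by rewrite in_set. Qed.

Definition Gi S v : {set col * 'I_k} := [set p in E (S :\ v) | upd p.1 v p.2 \in Good S].

Lemma card_Gi (S : {set T}) v : #|Gi S v| <= C S.
Proof.
have inj : {in Gi S v &, injective (fun p : col * 'I_k => upd p.1 v p.2)}; last first.
  rewrite -(card_in_imset inj).
  apply: subset_leq_card; apply/subsetP => q /imsetP[p pB ->]; move: pB; rewrite inE => /andP[_ pG].
  exact: pG.
move=> [g1 c1] [g2 c2] /setIdP[H1 _] /setIdP[H2 _] Eq.
move: H1 H2; rewrite !inE_E /= => /GoodP[D1 _] /GoodP[D2 _].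
have nv1 : g1 v = None by apply/eqP; rewrite -[_ == _]negbK -D1 !inE eqxx.
have nv2 : g2 v = None by apply/eqP; rewrite -[_ == _]negbK -D2 !inE eqxx.
have := Eq; move/ffunP => /(_ v); rewrite !ffunE eqxx => -[<-].
congr pair; apply/ffunP => z; case: (eqVneq z v) => [->|zv]; first by rewrite nv1 nv2.
by move/ffunP: Eq => /(_ z); rewrite !ffunE (negbTE zv).
Qed.


Lemma inB0u S u p : (p \in B0u S u) = (p.1 \in Good S) && (p.1 u == Some p.2).
Proof. by rewrite in_set. Qed.

Lemma inBt S a x y p : (p \in Bt S a x y) =
  (p.1 \in Good S) && [&& p.1 a != None, p.1 a == p.1 x & p.1 y == Some p.2].
Proof. by rewrite in_set. Qed.

Definition N x := [set y | e x y].

Definition B0 S v := \bigcup_(u in N v) B0u (S :\ v) u.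
Definition BA S v := \bigcup_(a in N v) \bigcup_(b in N a :\ v)
   \bigcup_(w in N b :\ a) Bt (S :\ v) a w b.
Definition BB S v := \bigcup_(a in N v) \bigcup_(b in N v :\ a)
   \bigcup_(w in N b :\ v :\ a) Bt (S :\ v) a b w.

Lemma cover (sym : symmetric e) (irr : irreflexive e) (S : {set T}) v : v \in S ->
  E (S :\ v) \subset Gi S v :|: B0 S v :|: BA S v :|: BB S v.
Proof.
move=> vS; apply/subsetP => -[g c]; rewrite inE_E /= => gG.
have [gD gGood] := GoodP gG.
rewrite !in_setU.
case n0': (_ \in B0 S v); first by rewrite /= ?orbT.
case nA': (_ \in BA S v); first by rewrite /= ?orbT.
case nB': (_ \in BB S v); first by rewrite /= ?orbT.
have n0 := negbT n0'; have nA := negbT nA'; have nB := negbT nB'.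
have H0 : forall u, e v u -> g u != Some c.
  move=> u evu; apply: contra n0 => guc; apply/bigcupP; exists u; first by rewrite inE.
  by rewrite inB0u /= gG guc.
have HA : forall a b w, e v a -> e a b -> b != v -> e b w -> w != a ->
    ~~ [&& g a != None, g a == g w & g b == Some c].
  move=> a b w eva eab bv ebw wa; apply: contra nA => H.
  apply/bigcupP; exists a; first by rewrite inE.
  apply/bigcupP; exists b; first by rewrite !inE bv eab.
  apply/bigcupP; exists w; first by rewrite !inE wa ebw.
  by rewrite inBt /= gG H.
have HB : forall a b w, e v a -> e v b -> b != a -> e b w -> w != v -> w != a ->
    ~~ [&& g a != None, g a == g b & g w == Some c].
  move=> a b w eva evb ba ebw wv wa; apply: contra nB => H.
  apply/bigcupP; exists a; first by rewrite inE.
  apply/bigcupP; exists b; first by rewrite !inE ba evb.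
  apply/bigcupP; exists w; first by rewrite !inE wa wv ebw.
  by rewrite inBt /= gG H.
apply/orP; left; apply/orP; left; apply/orP; left.
apply/setIdP; split; first by rewrite inE_E.
rewrite /=.
pose f := upd g v c.
have fv : f v = Some c by rewrite ffunE eqxx.
have fx : forall x, x != v -> f x = g x by move=> x xv; rewrite ffunE (negbTE xv).
rewrite inE; apply/andP; split.
  apply/forallP => x; case: (eqVneq x v) => [->|xv]; first by rewrite fv vS.
  by rewrite fx // -gD !inE xv.
have /goodP[G1 G2] := gGood.
apply/goodP; split.
  move=> x y exy hx hy.
  case: (eqVneq x v) => [xv|xv]; case: (eqVneq y v) => [yv|yv].
  - by rewrite xv yv irr in exy.
  - rewrite xv fv fx //; rewrite eq_sym; apply: H0; by rewrite -xv.
  - rewrite yv fv fx //; apply: H0; by rewrite -yv sym.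
  - rewrite !fx //; apply: G1 => //; rewrite -fx //.
move=> a b c' d u eab ebc ecd ha hb hc hd.
have [[ab ac ad] [bc bd cd]] := uniq4 u.
case: (eqVneq a v) => [av|av].
  subst a.
  have bv : b != v by rewrite eq_sym.
  have cv : c' != v by rewrite eq_sym.
  have dv : d != v by rewrite eq_sym.
  rewrite !fx // in hb hc hd; rewrite fv !fx //.
  have db : d != b by rewrite eq_sym.
  apply: contra (HA b c' d eab ebc cv ecd db) => /andP[/eqP h1 /eqP h2].
  by rewrite hb h2 eqxx -h1 eqxx.
case: (eqVneq b v) => [bv|bv].
  subst b.
  have cv : c' != v by rewrite eq_sym.
  have dv : d != v by rewrite eq_sym.
  rewrite !fx // in ha hc hd; rewrite fv !fx //.
  have ca : c' != a by rewrite eq_sym.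
  have eva : e v a by rewrite sym.
  have da : d != a by rewrite eq_sym.
  apply: contra (HB a c' d eva ebc ca ecd dv da) => /andP[h1 /eqP h2].
  by rewrite ha h1 -h2 eqxx.
case: (eqVneq c' v) => [cv|cv].
  subst c'.
  have dv : d != v by rewrite eq_sym.
  rewrite !fx // in ha hb hd; rewrite fv !fx //.
  have evb : e v b by rewrite sym.
  have eba : e b a by rewrite sym.
  apply: contra (HB d b a ecd evb bd eba av ad) => /andP[h1 h2].
  by rewrite hd eq_sym h2 h1.
case: (eqVneq d v) => [dv|dv].
  subst d.
  rewrite !fx // in ha hb hc; rewrite fv !fx //.
  have evc : e v c' by rewrite sym.
  have ecb : e c' b by rewrite sym.
  have eba : e b a by rewrite sym.
  apply: contra (HA c' b a evc ecb bv eba ac) => /andP[h1 h2].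
  by rewrite hc eq_sym h1 h2.
rewrite !fx // in ha hb hc hd *; exact: G2.
Qed.


Lemma cardND (D : nat) x y : #|N x| <= D -> y \in N x -> #|N x :\ y| <= D - 1.
Proof. move=> hx yN; move: (cardsD1 y (N x)); rewrite yN /= => h; lia. Qed.

Definition M (S : {set T}) a := if a \in S then C (S :\ a) else 0.

Lemma Bt_M (S : {set T}) a x y : x != a -> y != a -> #|Bt S a x y| <= M S a.
Proof.
rewrite /M => xa ya; case: ifP => aS; first exact: card_Bt.
by rewrite card_Bt0 // aS.
Qed.

Lemma bound_BA (sym : symmetric e) (irr : irreflexive e) (D : nat)
  (hD : forall x, #|N x| <= D) (S : {set T}) v :
  #|BA S v| <= (D - 1) * (D - 1) * \sum_(a in N v) M (S :\ v) a.
Proof.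
apply: leq_trans; first exact: card_bigcup_le.
rewrite big_distrr /=; apply: leq_sum => a av.
apply: leq_trans; first exact: card_bigcup_le.
apply: (@leq_trans (\sum_(b in N a :\ v) ((D - 1) * M (S :\ v) a))).
  apply: leq_sum => b bN; apply: leq_trans; first exact: card_bigcup_le.
  apply: (@leq_trans (\sum_(w in N b :\ a) M (S :\ v) a)).
    apply: leq_sum => w; rewrite !inE => /andP[wa _]; apply: Bt_M => //.
    move: bN; rewrite !inE => /andP[_ eab]; apply/eqP => ba; by rewrite ba irr in eab.
  rewrite sum_nat_const leq_mul2r; apply/orP; right; apply: cardND => //.
  by move: bN; rewrite !inE sym => /andP[_ ->].
rewrite sum_nat_const -mulnA leq_mul2r; apply/orP; right; apply: cardND => //.
by move: av; rewrite !inE sym.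
Qed.

Lemma bound_BB (sym : symmetric e) (irr : irreflexive e) (D : nat)
  (hD : forall x, #|N x| <= D) (S : {set T}) v :
  #|BB S v| <= (D - 1) * (D - 1) * \sum_(a in N v) M (S :\ v) a.
Proof.
apply: leq_trans; first exact: card_bigcup_le.
rewrite big_distrr /=; apply: leq_sum => a av.
apply: leq_trans; first exact: card_bigcup_le.
apply: (@leq_trans (\sum_(b in N v :\ a) ((D - 1) * M (S :\ v) a))).
  apply: leq_sum => b bN; apply: leq_trans; first exact: card_bigcup_le.
  apply: (@leq_trans (\sum_(w in N b :\ v :\ a) M (S :\ v) a)).
    apply: leq_sum => w; rewrite !inE => /andP[wa _]; apply: Bt_M => //.
    by move: bN; rewrite !inE => /andP[].
  rewrite sum_nat_const leq_mul2r; apply/orP; right.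
  apply: leq_trans; first (apply: subset_leq_card; exact: subD1set).
  apply: cardND => //.
  by move: bN; rewrite !inE sym => /andP[_ ->].
rewrite sum_nat_const -mulnA leq_mul2r; apply/orP; right; apply: cardND => //.
Qed.

Lemma bound_B0 (D : nat) (hD : forall x, #|N x| <= D) (S : {set T}) v :
  #|B0 S v| <= D * C (S :\ v).
Proof.
apply: leq_trans; first exact: card_bigcup_le.
apply: leq_trans; first (apply: leq_sum => u _; exact: card_B0u).
by rewrite sum_nat_const leq_mul2r hD orbT.
Qed.

Lemma count_nat (sym : symmetric e) (irr : irreflexive e) (D : nat)
  (hD : forall x, #|N x| <= D) (S : {set T}) v : v \in S ->
  C (S :\ v) * k <= C S + D * C (S :\ v) +
     2 * ((D - 1) * (D - 1) * \sum_(a in N v) M (S :\ v) a).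
Proof.
move=> vS; rewrite -card_E.
apply: leq_trans; first exact: (subset_leq_card (cover sym irr vS)).
have h1 := card_Gi S v; have h2 := bound_B0 hD S v.
have h3 := bound_BA sym irr hD S v; have h4 := bound_BB sym irr hD S v.
have u1 := card_setU_le (Gi S v :|: B0 S v :|: BA S v) (BB S v).
have u2 := card_setU_le (Gi S v :|: B0 S v) (BA S v).
have u3 := card_setU_le (Gi S v) (B0 S v).
lia.
Qed.

End Star.

Local Open Scope ring_scope.

Lemma stepR (R : realFieldType) (T : finType) (e : rel T) (k : nat)
  (sym : symmetric e) (irr : irreflexive e) (D : nat)
  (hD : forall x, (#|N e x| <= D)%N) (b : R) (bpos : 0 < b)
  (hk : (2 * D * (D - 1) * (D - 1))%:R + b ^+ 2 + b * D%:R <= b * k%:R) :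
  forall (S : {set T}) v, v \in S -> b * (C e k (S :\ v))%:R <= (C e k S)%:R.
Proof.
move=> S; move: {2}#|S| (leqnn #|S|) => n; elim: n S => [|n IH] S Sn v vS.
  have : (0 < #|S|)%N by apply/card_gt0P; exists v.
  by rewrite ltnNge Sn.
set S' := S :\ v.
have S'n : (#|S'| <= n)%N by rewrite /S'; have := cardsD1 v S; rewrite vS /=; lia.
have hM : forall a, b * (M e k S' a)%:R <= (C e k S')%:R.
  move=> a; rewrite /M; case: ifP => aS; first exact: IH.
  by rewrite mulr0 ler0n.
have hX : b * (\sum_(a in N e v) M e k S' a)%:R <= (D * C e k S')%:R.
  rewrite natr_sum mulr_sumr.
  apply: le_trans; first (apply: ler_sum => a _; exact: hM a).
  rewrite sumr_const -mulrnA ler_nat mulnC leq_mul2r; apply/orP; right; exact: hD.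
have hc := count_nat k sym irr hD vS.
have hc' : ((C e k S' * k)%:R : R) <=
   (C e k S + D * C e k S' + 2 * ((D - 1) * (D - 1) * \sum_(a in N e v) M e k S' a))%:R.
  by rewrite ler_nat.
move: hc' hX hk; rewrite !natrD !natrM.
set c' := (C e k S')%:R; set cs := (C e k S)%:R; set d := D%:R; set dm := (D - 1)%:R.
set x := (\sum_(a in N e v) M e k S' a)%:R; set kk := k%:R.
move=> hc' hX hk.
have c'0 : 0 <= c' by rewrite ler0n.
have dm0 : 0 <= dm by rewrite ler0n.
have p1 := ler_wpM2l (ltW bpos) hc'.
have q : 0 <= 2%:R * dm * dm by rewrite !mulr_ge0 ?ler0n.
have p2 := ler_wpM2l q hX.
have p3 := ler_wpM2l c'0 hk.
have : b * (b * c') <= b * cs by nra.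
by rewrite ler_pM2l.
Qed.

Lemma Cpos (R : realFieldType) (T : finType) (e : rel T) (k : nat)
  (sym : symmetric e) (irr : irreflexive e) (D : nat)
  (hD : forall x, (#|N e x| <= D)%N) (b : R) (bpos : 0 < b)
  (hk : (2 * D * (D - 1) * (D - 1))%:R + b ^+ 2 + b * D%:R <= b * k%:R) :
  forall (S : {set T}), (0 < C e k S)%N.
Proof.
move=> S; move: {2}#|S| (leqnn #|S|) => n; elim: n S => [|n IH] S Sn;
  case: (set_0Vmem S) => [->|[v vS]].
- apply/card_gt0P; exists [ffun => None]; rewrite inE; apply/andP; split.
    by apply/forallP => x; rewrite inE ffunE.
  apply/goodP; split.
    by move=> x y _; rewrite ffunE eqxx.
  by move=> a b' c d _ _ _ _; rewrite ffunE eqxx.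
- have : (0 < #|S|)%N by apply/card_gt0P; exists v.
  by rewrite ltnNge Sn.
- apply/card_gt0P; exists [ffun => None]; rewrite inE; apply/andP; split.
    by apply/forallP => x; rewrite inE ffunE.
  apply/goodP; split.
    by move=> x y _; rewrite ffunE eqxx.
  by move=> a b' c d _ _ _ _; rewrite ffunE eqxx.
- have h1 : (0 < C e k (S :\ v))%N.
    apply: IH; have := cardsD1 v S; rewrite vS /=; lia.
  have h2 := stepR sym irr hD bpos hk vS.
  have h3 : (0 : R) < b * (C e k (S :\ v))%:R by rewrite mulr_gt0 // ltr0n.
  by rewrite -(ltr0n R); apply: lt_le_trans h3 h2.
Qed.

Lemma colorable_of (R : realFieldType) (T : finType) (e : rel T) (k : nat)
  (sym : symmetric e) (irr : irreflexive e) (D : nat)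
  (hD : forall x, (#|N e x| <= D)%N) (b : R) (bpos : 0 < b)
  (hk : (2 * D * (D - 1) * (D - 1))%:R + b ^+ 2 + b * D%:R <= b * k%:R)
  (kpos : (0 < k)%N) : star_colorable e k.
Proof.
have := Cpos sym irr hD bpos hk [set: T].
move/card_gt0P => [f /GoodP[fD /goodP[G1 G2]]].
pose d0 : 'I_k := Ordinal kpos.
pose F := [ffun x => odflt d0 (f x)].
have fS : forall x, f x = Some (F x).
  move=> x; have := fD x; rewrite inE ffunE => /esym.
  by case: (f x).
have fN : forall x, f x != None by move=> x; rewrite fS.
apply/existsP; exists F; apply/andP; split.
  apply/forallP => x; apply/forallP => y; apply/implyP => exy.
  have := G1 x y exy (fN x) (fN y); by rewrite !fS.
apply/forallP => a; apply/forallP => b'; apply/forallP => c; apply/forallP => d.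
apply/implyP => /andP[u /and3P[eab ebc ecd]].
have := G2 a b' c d u eab ebc ecd (fN a) (fN b') (fN c) (fN d).
rewrite !fS /= => h.
have [[ab ac ad] [bc bd cd]] := uniq4 u.
apply: undup3 => //.
- by have := G1 a b' eab (fN a) (fN b'); rewrite !fS.
- by have := G1 b' c ebc (fN b') (fN c); rewrite !fS.
- by have := G1 c d ecd (fN c) (fN d); rewrite !fS.
Qed.

Unset Implicit Arguments.

Theorem corollary11 (R : rcfType) (T : finType) (e : rel T) :
  simple_graph e -> (1 <= max_degree e)%N ->
  (star_chromatic e)%:R <=
    2 * Num.sqrt (2 : R) * ((max_degree e)%:R * Num.sqrt ((max_degree e)%:R))
    + (max_degree e)%:R.
Proof.
move=> [sym irr] D1.
set D := max_degree e.
have hD : forall x, (#|N e x| <= D)%N by move=> x; rewrite /D /max_degree; exact: (leq_bigmax (F := fun x => deg e x)).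
set r := Num.sqrt (2 : R); set s := Num.sqrt (D%:R : R).
set X := 2 * r * (D%:R * s) + D%:R.
have r0 : 0 <= r by apply: sqrtr_ge0.
have s0 : 0 <= s by apply: sqrtr_ge0.
have r2 : r ^+ 2 = 2 by rewrite sqr_sqrtr // ler0n.
have s2 : s ^+ 2 = D%:R by rewrite sqr_sqrtr // ler0n.
have d1 : 1 <= (D%:R : R) by rewrite ler1n.
have r_le : r <= 2 by nra.
have d0 : 0 <= (D%:R : R) by rewrite ler0n.
have s_le : s <= D%:R by nra.
have XM : X <= (4 * D * D + D)%:R.
  have h := ler_pM r0 s0 r_le s_le.
  have h2 := ler_wpM2l d0 h.
  rewrite /X natrD !natrM; nra.
have exP : exists i, (fun i : nat => i%:R <= X) i.
  by exists 0%N; rewrite /= /X; have := mulr_ge0 r0 (mulr_ge0 d0 s0); nra.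
have ubP : forall i, (fun i : nat => i%:R <= X) i -> (i <= 4 * D * D + D)%N.
  by move=> i /= hi; rewrite -(ler_nat R); apply: le_trans hi XM.
case: (ex_maxnP exP ubP) => k /= kX kmax.
have Xk : X < k.+1%:R.
  by rewrite ltNge; apply/negP => h; have := kmax _ h; rewrite ltnn.
have kpos : (0 < k)%N.
  apply: kmax; rewrite /= /X; have := mulr_ge0 r0 (mulr_ge0 d0 s0); nra.
pose b := r * D%:R * s.
have bpos : 0 < b.
  rewrite /b !mulr_gt0 //.
  - rewrite lt_neqAle r0 andbT; apply/eqP => h; move: r2; rewrite -h; rewrite expr0n /=.
    by move/eqP; rewrite eq_sym pnatr_eq0.
  - by apply: lt_le_trans d1.
  - rewrite lt_neqAle s0 andbT; apply/eqP => h; move: s2; rewrite -h expr0n /= => h'.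
    by move: d1; rewrite -h' ler10.
have rs : r * s <= 4 * D%:R - 2.
  have rs2 : (r * s) ^+ 2 = 2 * D%:R by rewrite exprMn r2 s2.
  nra.
have hk : (2 * D * (D - 1) * (D - 1))%:R + b ^+ 2 + b * D%:R <= b * k%:R.
  rewrite !natrM natrB //.
  have b2 : b ^+ 2 = 2 * D%:R ^+ 3.
    by rewrite /b !exprMn r2 s2; rewrite !exprS expr0; ring.
  have kk : 2 * b + D%:R - 1 <= k%:R.
    have eqX : X = 2 * b + D%:R by rewrite /X /b; ring.
    by move: Xk; rewrite eqX -natr1 => h; lra.
  have h1 := ler_wpM2l (ltW bpos) kk.
  have h2 : b <= D%:R * (4 * D%:R - 2).
    rewrite /b -mulrA mulrC -mulrA; apply: ler_wpM2l; [by rewrite ler0n | by rewrite mulrC].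
  rewrite b2 in h1 *; nra.
have col := colorable_of sym irr hD bpos hk kpos.
have : (star_chromatic e <= k)%N.
  rewrite /star_chromatic; case: ex_minnP => m _ hmin; apply: hmin; by rewrite col.
rewrite -(ler_nat R) => h; apply: le_trans h kX.
Qed.
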